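(* Let $(\hat q(k))_{k\ge1}$ be a sequence of positive numbers. (1) If for all $k$ large enough $$\hat q(k)\ge\frac{1}{1+\frac{1-p}{p}Q(k)}\Big(\sum_{i=1}^{\lfloor (k-1)/2\rfloor}q(i)\hat q(k-i)+\frac{1-p}{2p}q(k)^2+\mathbf 1_{\{k\text{ even}\}}\tfrac12 q(k/2)^2\Big),$$ then there is $C>0$ with $q(k)\le C\hat q(k)$ for all $k\ge1$. (2) If for all $k$ large enough $$\hat q(k)\le\frac{1}{1+\frac{1-p}{p}Q(k)}\sum_{i=1}^{\lfloor (k-1)/2\rfloor}q(i)\hat q(k-i),$$ then there is $c>0$ with $c\,\hat q(k)\le q(k)$ for all $k\ge1$.
   Context: A sign-decorated binary tree is a finite planar rooted tree in which every internal vertex (node) has exactly two ordered children and carries a sign $\oplus$ or $\ominus$; $\mathrm{LIS}(t)$ is the maximal number of leaves in a set of leaves whose pairwise highest common ancestors all carry $\oplus$. Fix $p\in(0,1)$. $T$ is a critical binary Bienaymé–Galton–Watson tree with i.i.d. node signs, $\mathbb P(\oplus)=p$; $q(k)=\mathbb P(\mathrm{LIS}(T)=k)>0$, $Q(k)=\mathbb P(\mathrm{LIS}(T)\ge k)$. These satisfy, for $k\ge2$, $q(k)=(1-p)q(k)\sum_{i=1}^{k-1}q(i)+p\sum_{i=1}^{\lfloor(k-1)/2\rfloor}q(i)q(k-i)+\frac{1-p}2q(k)^2+\mathbf 1_{\{k\text{ even}\}}\frac p2 q(k/2)^2$. *)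

(* Defs.v *)
From HB Require Import structures.
From mathcomp Require Import all_boot all_order all_algebra.
From mathcomp Require Import all_classical all_reals all_analysis.
Set Implicit Arguments. Unset Strict Implicit. Unset Printing Implicit Defensive.
Import Order.TTheory GRing.Theory Num.Theory.
Local Open Scope ring_scope.

(* Sign-decorated (full) binary planar trees: every internal node has exactly
   two ordered children (left, right) and a sign; [true] = (+), [false] = (-). *)
Inductive stree : Type :=
| Leaf : stree
| Node : bool -> stree -> stree -> stree.

(* Vertices are addressed by paths from the root: false = left, true = right. *)
Fixpoint leaves (t : stree) : seq (seq bool) :=
  match t with
  | Leaf => [:: [::]]
  | Node _ l r => map (cons false) (leaves l) ++ map (cons true) (leaves r)
  end.

Fixpoint sign_at (t : stree) (w : seq bool) : option bool :=
  match t, w with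
  | Leaf, _ => None
  | Node s _ _, [::] => Some s
  | Node _ l r, b :: w' => sign_at (if b then r else l) w'
  end.

(* longest common prefix of two addresses = address of highest common ancestor *)
Fixpoint lcp (u v : seq bool) : seq bool :=
  match u, v with
  | a :: u', b :: v' => if a == b then a :: lcp u' v' else [::]
  | _, _ => [::]
  end.

Definition leaf_at (t : stree) (i : nat) : seq bool := nth [::] (leaves t) i.

Definition LIS (t : stree) : nat :=
  \max_(A : {set 'I_(size (leaves t))} |
          [forall i in A, forall j in A,
             (i != j) ==> (sign_at t (lcp (leaf_at t i) (leaf_at t j)) == Some true)])
     #|A|.

Fixpoint nplus (t : stree) : nat :=
  match t with Leaf => 0 | Node s l r => (s : nat) + nplus l + nplus r end.
Fixpoint nminus (t : stree) : nat :=
  match t with Leaf => 0 | Node s l r => (~~ s : nat) + nminus l + nminus r end.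
Fixpoint nvert (t : stree) : nat :=
  match t with Leaf => 1 | Node _ l r => (nvert l + nvert r).+1 end.

(* Probability that the critical binary BGW tree (offspring 0 or 2, each w.p. 1/2)
   with i.i.d. signs (P(+) = p) equals the finite sign-decorated tree t. *)
Definition weight {R : realType} (p : R) (t : stree) : R :=
  (2^-1) ^+ nvert t * p ^+ nplus t * (1 - p) ^+ nminus t.

Fixpoint trees_upto (h : nat) : seq stree :=
  match h with
  | 0 => [:: Leaf]
  | h'.+1 => Leaf :: flatten [seq [seq Node s l r | l <- trees_upto h', r <- trees_upto h']
                             | s <- [:: true; false]]
  end.

(* q(k) = P(LIS(T) = k) = lim_h P(LIS(T) = k, height(T) <= h). *)
Definition qLIS {R : realType} (p : R) (k : nat) : R :=
  limn (fun h => \sum_(t <- trees_upto h | LIS t == k) weight p t).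

Definition QLIS {R : realType} (p : R) (k : nat) : R :=
  limn (fun h => \sum_(t <- trees_upto h | (k <= LIS t)%N) weight p t).

(* Main.v *)
Require Import Defs.
From HB Require Import structures.
From mathcomp Require Import all_boot all_order all_algebra.
From mathcomp Require Import all_classical all_reals all_analysis.
From mathcomp Require Import zify ring lra.
Import Order.TTheory GRing.Theory Num.Theory.
Import numFieldNormedType.Exports.

Fixpoint lis (t : stree) : nat :=
  match t with
  | Leaf => 1%N
  | Node b l r => if b then (lis l + lis r)%N else maxn (lis l) (lis r)
  end.

Definition Ed t (i j : nat) := sign_at t (lcp (leaf_at t i) (leaf_at t j)) == Some true.

Definition clique t (s : seq nat) :=
  [/\ uniq s, (forall i, i \in s -> (i < size (leaves t))%N) &
      (forall i j, i \in s -> j \in s -> i != j -> Ed t i j)].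

Lemma size_leaves_Node b l r :
  size (leaves (Node b l r)) = (size (leaves l) + size (leaves r))%N.
Proof. by rewrite /= size_cat !size_map. Qed.

Lemma leaf_at_l b l r i : (i < size (leaves l))%N ->
  leaf_at (Node b l r) i = false :: leaf_at l i.
Proof. by move=> Hi; rewrite /leaf_at /= nth_cat size_map Hi (nth_map [::]). Qed.

Lemma leaf_at_r b l r i : (size (leaves l) <= i < size (leaves l) + size (leaves r))%N ->
  leaf_at (Node b l r) i = true :: leaf_at r (i - size (leaves l)).
Proof.
move=> /andP[H1 H2]; rewrite /leaf_at /= nth_cat size_map ltnNge H1 /=.
by rewrite (nth_map [::]) //; lia.
Qed.

Lemma Ed_ll b l r i j : (i < size (leaves l))%N -> (j < size (leaves l))%N ->
  Ed (Node b l r) i j = Ed l i j.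
Proof. by move=> Hi Hj; rewrite /Ed !leaf_at_l. Qed.

Lemma Ed_rr b l r i j :
  (size (leaves l) <= i < size (leaves l) + size (leaves r))%N ->
  (size (leaves l) <= j < size (leaves l) + size (leaves r))%N ->
  Ed (Node b l r) i j = Ed r (i - size (leaves l)) (j - size (leaves l)).
Proof. by move=> Hi Hj; rewrite /Ed !leaf_at_r. Qed.

Lemma Ed_lr b l r i j : (i < size (leaves l))%N ->
  (size (leaves l) <= j < size (leaves l) + size (leaves r))%N ->
  Ed (Node b l r) i j = b.
Proof. by move=> Hi Hj; rewrite /Ed leaf_at_l // leaf_at_r //=; case: b. Qed.

Lemma clique_ub t s : clique t s -> (size s <= lis t)%N.
Proof.
elim: t s => [|b l IHl r IHr] s [Hu Hb Hp].
  rewrite /=; have -> : (1 = size [:: 0%N])%N by [].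
  apply: uniq_leq_size => // i /Hb /=; rewrite ltnS leqn0 => /eqP ->.
  by rewrite inE.
set nl := size (leaves l); set nr := size (leaves r).
have Hb' : forall i, i \in s -> (i < nl + nr)%N by move=> i /Hb; rewrite size_leaves_Node.
set a := fun i : nat => (i < nl)%N.
set s1 := seq.filter a s.
set s2 := map (subn^~ nl) (seq.filter (predC a) s).
have Hsz : size s = (size s1 + size s2)%N.
  by rewrite size_map !size_filter count_predC.
have C1 : clique l s1.
  split; first by rewrite filter_uniq.
    by move=> i; rewrite mem_filter => /andP[].
  move=> i j; rewrite !mem_filter => /andP[Hi Hsi] /andP[Hj Hsj] Hij.
  by rewrite /a in Hi Hj; rewrite -(Ed_ll b l r i j Hi Hj); apply: Hp.
have C2 : clique r s2.
  split.
  - rewrite map_inj_in_uniq ?filter_uniq // => i j.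
    rewrite !mem_filter /a /= => /andP[Hi _] /andP[Hj _]; lia.
  - move=> i /mapP[j]; rewrite mem_filter /a /= => /andP[Hj /Hb'] Hj2 ->; lia.
  - move=> i j /mapP[i']; rewrite mem_filter /a /= => /andP[Hi' Hs'] -> {i}.
    move=> /mapP[j']; rewrite mem_filter /a /= => /andP[Hj' Ht'] -> {j} Hij.
    have := Hb' _ Hs'; have := Hb' _ Ht' => H1 H2.
    rewrite -(Ed_rr b); last 2 first.
    + by apply/andP; split; lia.
    + by apply/andP; split; lia.
    apply: Hp => //; apply: contra Hij => /eqP ->; by [].
have U1 := IHl _ C1; have U2 := IHr _ C2.
rewrite /= Hsz; destruct b.
  exact: leq_add.
case E1: s1 => [|i s1']; first by rewrite /= leq_max U2 orbT.
case E2: s2 => [|j s2']; first by rewrite addn0 leq_max -E1 U1.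
exfalso.
have : i \in s1 by rewrite E1 inE eqxx.
have : j \in s2 by rewrite E2 inE eqxx.
move=> /mapP[j']; rewrite mem_filter /a /= => /andP[Hj' Hs'] _.
rewrite mem_filter /a => /andP[Hi Hsi].
have Hij : i != j' by apply/negP => /eqP Hx; rewrite Hx in Hi; lia.
have := Hp _ _ Hsi Hs' Hij.
rewrite Ed_lr //; apply/andP; split; [lia | exact: Hb'].
Qed.

Lemma clique_liftl b l r s : clique l s -> clique (Node b l r) s.
Proof.
move=> [Hu Hb Hp]; split => //.
  by move=> i /Hb Hi; rewrite size_leaves_Node; lia.
by move=> i j Hi Hj Hij; rewrite Ed_ll ?Hb //; apply: Hp.
Qed.

Lemma clique_liftr b l r s : clique r s ->
  clique (Node b l r) (map (addn (size (leaves l))) s).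
Proof.
move=> [Hu Hb Hp]; split.
- by rewrite map_inj_uniq //; apply: addnI.
- by move=> i /mapP[j /Hb Hj ->]; rewrite size_leaves_Node; lia.
- move=> i j /mapP[i' Hi' ->] /mapP[j' Hj' ->] Hij.
  have := Hb _ Hi'; have := Hb _ Hj' => H1 H2.
  rewrite Ed_rr; last 2 first.
  + by apply/andP; split; lia.
  + by apply/andP; split; lia.
  rewrite !(addnC (size (leaves l))) !addnK; apply: Hp => //.
  by apply: contra Hij => /eqP ->.
Qed.

Lemma clique_cat l r s1 s2 : clique l s1 -> clique r s2 ->
  clique (Node true l r) (s1 ++ map (addn (size (leaves l))) s2).
Proof.
move=> C1 C2; have [Hu1 Hb1 Hp1] := clique_liftl true l r s1 C1.
have [Hu2 Hb2 Hp2] := clique_liftr true l r s2 C2.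
have [_ Hl _] := C1; have [_ Hr _] := C2.
split.
- rewrite cat_uniq Hu1 Hu2 andbT /=; apply/hasPn => x /mapP[j Hj ->].
  by apply/negP => /Hl; lia.
- by move=> i; rewrite mem_cat => /orP[/Hb1|/Hb2].
- have key : forall i j, i \in s1 -> j \in map (addn (size (leaves l))) s2 ->
      Ed (Node true l r) i j.
    move=> i j Hi /mapP[j' Hj' ->]; rewrite Ed_lr //; first exact: Hl.
    by have := Hr _ Hj'; move=> H; apply/andP; split; lia.
  move=> i j; rewrite !mem_cat => /orP[Hi|Hi] /orP[Hj|Hj] Hij.
  + exact: Hp1.
  + exact: key.
  + rewrite /Ed; rewrite /Ed in key.
    have lcpC : forall u v : seq bool, lcp u v = lcp v u.
      elim=> [|x u IH] [|y v] //=; rewrite eq_sym; case: eqP => [->|//].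
      by rewrite IH.
    by rewrite lcpC; apply: key.
  + exact: Hp2.
Qed.

Lemma clique_lb t : exists s, clique t s /\ size s = lis t.
Proof.
elim: t => [|b l [s1 [C1 E1]] r [s2 [C2 E2]]].
  exists [:: 0%N]; split => //; split => //.
    by move=> i; rewrite inE => /eqP ->.
  by move=> i j; rewrite !inE => /eqP -> /eqP ->; rewrite eqxx.
case: b => /=.
  exists (s1 ++ map (addn (size (leaves l))) s2); split; first exact: clique_cat.
  by rewrite size_cat size_map E1 E2.
case: (leqP (lis r) (lis l)) => H.
  exists s1; split; first exact: clique_liftl.
  by rewrite E1.
exists (map (addn (size (leaves l))) s2); split; first exact: clique_liftr.
by rewrite size_map E2.
Qed.

Lemma LIS_lis t : LIS t = lis t.
Proof.
apply/eqP; rewrite eqn_leq; apply/andP; split.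
  apply/bigmax_leqP => A HA; rewrite cardE -(size_map val).
  apply: clique_ub; split.
  - by rewrite map_inj_uniq ?enum_uniq //; apply: val_inj.
  - by move=> i /mapP[j _ ->]; apply: ltn_ord.
  - move=> i j /mapP[i' Hi' ->] /mapP[j' Hj' ->] Hij.
    rewrite mem_enum in Hi'; rewrite mem_enum in Hj'.
    have := forallP HA i'; rewrite Hi' /= => /forallP /(_ j'); rewrite Hj' /=.
    by move=> /implyP; apply.
have [s [[Hu Hb Hp] <-]] := clique_lb t.
set s' := pmap (insub : nat -> option 'I_(size (leaves t))) s.
have Hs' : size s' = size s.
  by rewrite size_pmap_sub; apply/eqP; rewrite -all_count; apply/allP.
rewrite -Hs' -(card_uniqP _); last exact: pmap_sub_uniq.
rewrite -cardsE; apply: (leq_bigmax_cond [set i in s']).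
apply/forallP => i; apply/implyP; rewrite inE mem_pmap_sub => Hi.
apply/forallP => j; apply/implyP; rewrite inE mem_pmap_sub => Hj.
apply/implyP => Hij; apply: Hp => //;
try by apply: contra Hij => /eqP /val_inj ->.
Qed.

Local Open Scope classical_set_scope.
Local Open Scope ring_scope.
Set Implicit Arguments. Unset Strict Implicit.

Lemma sum_trees_S (R : realType) h (g : stree -> R) :
  \sum_(t <- trees_upto h.+1) g t = g Leaf +
  \sum_(l <- trees_upto h) \sum_(r <- trees_upto h) (g (Node true l r) + g (Node false l r)).
Proof.
rewrite /= big_cons cats0 big_cat.
rewrite !big_allpairs_dep; congr (_ + _).
symmetry; under eq_bigr => l _ do rewrite big_split; rewrite big_split; reflexivity.
Qed.

Lemma sum_trees_mono (R : realType) h (g : stree -> R) : (forall t, 0 <= g t) ->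
  \sum_(t <- trees_upto h) g t <= \sum_(t <- trees_upto h.+1) g t.
Proof.
elim: h g => [|h IH] g Hg.
  rewrite sum_trees_S big_seq1 lerDl; apply: sumr_ge0 => l _; apply: sumr_ge0 => r _.
  by apply: addr_ge0.
rewrite (sum_trees_S h) (sum_trees_S h.+1) lerD2l.
apply: le_trans (IH _ _); last first.
  by move=> l; apply: sumr_ge0 => r _; apply: addr_ge0.
apply: ler_sum => l _; apply: IH => r; exact: addr_ge0.
Qed.

Lemma weight_Node (R : realType) (p : R) b l r :
  weight p (Node b l r) = 2^-1 * (if b then p else 1 - p) * weight p l * weight p r.
Proof.
rewrite /weight /=; case: b; rewrite /= ?add0n ?add1n !exprS !exprD ?expr0; ring.
Qed.

Lemma weight_ge0 (R : realType) (p : R) t : 0 <= p <= 1 -> 0 <= weight p t.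
Proof.
move=> /andP[H0 H1]; rewrite /weight; apply: mulr_ge0; [apply: mulr_ge0|];
  apply: exprn_ge0 => //; rewrite ?invr_ge0 ?subr_ge0 //.
Qed.

Lemma lis_pos t : (0 < lis t)%N.
Proof. elim: t => [|[] l Hl r Hr] //=; [lia | by rewrite leq_max Hl]. Qed.

Definition A (R : realType) (p : R) h (P : pred nat) : R :=
  \sum_(t <- trees_upto h) (P (lis t))%:R * weight p t.

Lemma A_filter (R : realType) (p : R) h (P : pred nat) :
  \sum_(t <- trees_upto h | P (LIS t)) weight p t = A p h P.
Proof.
rewrite big_mkcond; apply: eq_bigr => t _; rewrite LIS_lis.
by case: (P _); rewrite ?mul1r ?mul0r.
Qed.

Lemma A_ge0 (R : realType) (p : R) h P : 0 <= p <= 1 -> 0 <= A p h P.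
Proof.
move=> Hp; apply: sumr_ge0 => t _; apply: mulr_ge0; first exact: ler0n.
exact: weight_ge0.
Qed.

Lemma A_mono (R : realType) (p : R) h P : 0 <= p <= 1 -> A p h P <= A p h.+1 P.
Proof.
move=> Hp; apply: sum_trees_mono => t; apply: mulr_ge0; first exact: ler0n.
exact: weight_ge0.
Qed.

Lemma A_le (R : realType) (p : R) h P : 0 <= p <= 1 -> A p h P <= A p h predT.
Proof.
move=> Hp; apply: ler_sum => t _; apply: ler_wpM2r; first exact: weight_ge0.
by case: (P _).
Qed.

Lemma A_S (R : realType) (p : R) h (P : pred nat) :
  A p h.+1 P = (P 1%N)%:R * 2^-1 +
  (2^-1 * p) * (\sum_(l <- trees_upto h) \sum_(r <- trees_upto h)
      (P (lis l + lis r)%N)%:R * weight p l * weight p r) +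
  (2^-1 * (1 - p)) * (\sum_(l <- trees_upto h) \sum_(r <- trees_upto h)
      (P (maxn (lis l) (lis r)))%:R * weight p l * weight p r).
Proof.
have wL : weight p Leaf = 2^-1 by rewrite /weight /= expr1 !expr0 !mulr1.
rewrite /A sum_trees_S /= wL -addrA.
congr (_ + _).
rewrite !mulr_sumr -big_split; apply: eq_bigr => l _.
rewrite !mulr_sumr -big_split; apply: eq_bigr => r _.
rewrite !weight_Node /=; ring.
Qed.

Lemma A_prod (R : realType) (p : R) h (P Q : pred nat) :
  \sum_(l <- trees_upto h) \sum_(r <- trees_upto h)
      (P (lis l))%:R * (Q (lis r))%:R * weight p l * weight p r
  = A p h P * A p h Q.
Proof.
rewrite /A big_distrl; apply: eq_bigr => l _ /=; rewrite big_distrr.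
apply: eq_bigr => r _ /=; ring.
Qed.

Lemma ind_sum (R : realType) (a b k : nat) :
  ((a + b == k)%N%:R : R) = \sum_(i < k.+1) ((a == i)%:R * (b == k - i)%N%:R).
Proof.
case: (leqP a k) => Hak.
  rewrite (bigD1 (Ordinal (n:=k.+1) (m:=a) Hak)) //= eqxx mul1r big1 ?addr0.
    by congr (_%:R); apply/eqP/eqP; lia.
  move=> i Hi; suff -> : (a == i) = false by rewrite mul0r.
  by apply/negbTE; apply: contra Hi => /eqP Hai; apply/eqP/val_inj.
rewrite big1.
  by have -> : (a + b == k) = false by apply/negbTE; apply/eqP; lia.
move=> [i Hi] _ /=; have -> : (a == i) = false by apply/negbTE; apply/eqP; lia.
by rewrite mul0r.
Qed.

Lemma ind_max (R : realType) (a b k : nat) :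
  ((maxn a b == k)%:R : R) = (a == k)%:R * (b < k)%N%:R + (a < k)%N%:R * (b == k)%:R
     + (a == k)%:R * (b == k)%:R.
Proof.
have H : ((maxn a b == k) : nat) = ((a==k) * (b<k) + (a<k)*(b==k) + (a==k)*(b==k))%N by lia.
by rewrite H !natrD !natrM.
Qed.

Lemma A_rec (R : realType) (p : R) h k :
  A p h.+1 (pred1 k) = (1 == k)%N%:R * 2^-1 +
    (2^-1 * p) * (\sum_(i < k.+1) A p h (pred1 (i : nat)) * A p h (pred1 (k - i)%N)) +
    (2^-1 * (1 - p)) * (2 * A p h (pred1 k) * A p h (fun n => (n < k)%N)
                       + A p h (pred1 k) ^+ 2).
Proof.
rewrite A_S /= eq_sym; congr (_ + _ * _ + _ * _).
- transitivity (\sum_(i < k.+1) \sum_(l <- trees_upto h) \sum_(r <- trees_upto h)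
      (pred1 (i : nat) (lis l))%:R * (pred1 (k - i)%N (lis r))%:R * weight p l * weight p r).
    rewrite [RHS]exchange_big; apply: eq_bigr => l _ /=.
    rewrite [RHS]exchange_big; apply: eq_bigr => r _ /=.
    rewrite ind_sum !mulr_suml; by apply: eq_bigr.
  by apply: eq_bigr => i _; rewrite A_prod.
- set a := A p h (pred1 k); set b := A p h (fun n => (n < k)%N).
  have -> : 2 * a * b + a ^+ 2 = a * b + b * a + a * a by ring.
  rewrite /a /b -(A_prod p h (pred1 k) (fun n => (n < k)%N)).
  rewrite -(A_prod p h (fun n => (n < k)%N) (pred1 k)) -(A_prod p h (pred1 k) (pred1 k)).
  rewrite -!big_split; apply: eq_bigr => l _; rewrite -!big_split; apply: eq_bigr => r _.
  by rewrite ind_max /= !mulrDl.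
Qed.

Lemma A_T_rec (R : realType) (p : R) h :
  A p h.+1 predT = 2^-1 + 2^-1 * A p h predT ^+ 2.
Proof.
have HX : forall c : R, c * (\sum_(l <- trees_upto h) \sum_(r <- trees_upto h)
      (predT (lis l + lis r)%N)%:R * weight p l * weight p r) = c * A p h predT ^+ 2.
  move=> c; rewrite expr2 -A_prod; congr (_ * _); apply: eq_bigr => l _.
  by apply: eq_bigr => r _; rewrite /= !mul1r.
have HY : forall c : R, c * (\sum_(l <- trees_upto h) \sum_(r <- trees_upto h)
      (predT (maxn (lis l) (lis r)))%:R * weight p l * weight p r) = c * A p h predT ^+ 2.
  move=> c; rewrite expr2 -A_prod; congr (_ * _); apply: eq_bigr => l _.
  by apply: eq_bigr => r _; rewrite /= !mul1r.
rewrite A_S HX HY /=; ring.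
Qed.

Lemma A_split (R : realType) (p : R) h k :
  A p h (fun n => (n < k)%N) = A p h predT - A p h (fun n => (k <= n)%N).
Proof.
apply/eqP; rewrite eq_sym subr_eq; apply/eqP.
rewrite /A -big_split; apply: eq_bigr => t _ /=; rewrite -mulrDl -natrD.
by case: ltnP.
Qed.

Lemma A_0 (R : realType) (p : R) h : A p h (pred1 0%N) = 0.
Proof.
rewrite /A big1 // => t _; have := lis_pos t.
by rewrite /= lt0n => /negbTE ->; rewrite mul0r.
Qed.

Lemma A_T_le1 (R : realType) (p : R) h : 0 <= p <= 1 -> A p h predT <= 1.
Proof.
move=> Hp; elim: h => [|h IH].
  rewrite /A big_seq1 /= /weight /= expr1 !expr0 !mulr1 mul1r.
  by rewrite invf_le1 // ler1n.
rewrite A_T_rec; have H0 := A_ge0 h predT Hp.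
have : A p h predT ^+ 2 <= 1 by rewrite expr_le1.
set x := A p h predT ^+ 2; lra.
Qed.

Lemma A_cvg (R : realType) (p : R) P : 0 <= p <= 1 ->
  (fun h => A p h P) @ \oo --> limn (fun h => A p h P).
Proof.
move=> Hp; apply: nondecreasing_is_cvgn.
  apply: (homo_leq (@lexx _ _)) => [y x z|h]; first exact: le_trans.
  exact: A_mono.
exists 1 => y [h _ <-]; apply: le_trans (A_le _ _ Hp) _; exact: A_T_le1.
Qed.

Lemma A_le_lim (R : realType) (p : R) P h : 0 <= p <= 1 ->
  A p h P <= limn (fun h => A p h P).
Proof.
move=> Hp; apply: (nondecreasing_cvgn_le (u_ := fun h => A p h P)).
  apply: (homo_leq (@lexx _ _)) => [y x z|n]; first exact: le_trans.
  exact: A_mono.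
exact: A_cvg.
Qed.

Lemma A_T_lim (R : realType) (p : R) : 0 <= p <= 1 ->
  limn (fun h => A p h predT) = 1.
Proof.
move=> Hp; set L := limn _.
have H1 := A_cvg (P:=predT) Hp.
have H2 : (fun h => A p h.+1 predT) @ \oo --> L.
  by rewrite (cvg_shiftS (fun h => A p h predT)).
have H3 : (fun h => A p h.+1 predT) @ \oo --> 2^-1 + 2^-1 * (L * L).
  under eq_fun do rewrite A_T_rec expr2.
  apply: cvgD; first exact: cvg_cst.
  apply: cvgM; first exact: cvg_cst.
  exact: cvgM.
have E : L = 2^-1 + 2^-1 * (L * L).
  exact: etrans (esym (cvg_lim (@Rhausdorff R) H2)) (cvg_lim (@Rhausdorff R) H3).
have : (L - 1) ^+ 2 = 0.
  have -> : (L - 1) ^+ 2 = 2 * (2^-1 + 2^-1 * (L * L) - L) by field.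
  by rewrite -E subrr mulr0.
by move/eqP; rewrite sqrf_eq0 subr_eq0 => /eqP.
Qed.

Lemma qLIS_A (R : realType) (p : R) k :
  qLIS p k = limn (fun h => A p h (pred1 k)).
Proof.
rewrite /qLIS (_ : (fun h => \sum_(t <- trees_upto h | LIS t == k) weight p t) =
  (fun h => A p h (pred1 k))) //.
by apply/funext => h; exact: (A_filter p h (pred1 k)).
Qed.

Lemma QLIS_A (R : realType) (p : R) k :
  QLIS p k = limn (fun h => A p h (fun n => (k <= n)%N)).
Proof.
rewrite /QLIS (_ : (fun h => \sum_(t <- trees_upto h | (k <= LIS t)%N) weight p t) =
  (fun h => A p h (fun n => (k <= n)%N))) //.
by apply/funext => h; exact: (A_filter p h (fun n => (k <= n)%N)).
Qed.

Lemma cvg_sum_ord (R : realType) n (u : nat -> nat -> R) (l : nat -> R) :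
  (forall i, u i @ \oo --> l i) ->
  (fun h => \sum_(i < n) u i h) @ \oo --> \sum_(i < n) l i.
Proof.
move=> Hu; elim: n => [|n IH].
  under eq_fun do rewrite big_ord0.
  rewrite big_ord0; exact: cvg_cst.
under eq_fun do rewrite big_ord_recr.
rewrite big_ord_recr; apply: cvgD; first exact: IH.
exact: Hu.
Qed.

Lemma q_rec (R : realType) (p : R) k : 0 <= p <= 1 -> (2 <= k)%N ->
  qLIS p k = 2^-1 * p * (\sum_(i < k.+1) qLIS p i * qLIS p (k - i)%N)
    + 2^-1 * (1 - p) * (2 * qLIS p k * (1 - QLIS p k) + qLIS p k ^+ 2).
Proof.
move=> Hp Hk.
have Hq : forall i, (fun h => A p h (pred1 i)) @ \oo --> qLIS p i.
  by move=> i; rewrite qLIS_A; apply: A_cvg.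
have HQ : (fun h => A p h (fun n => (k <= n)%N)) @ \oo --> QLIS p k.
  by rewrite QLIS_A; apply: A_cvg.
have Hx : (fun h => A p h predT) @ \oo --> (1 : R).
  by have := A_cvg (P:=predT) Hp; rewrite A_T_lim.
have H2 : (fun h => A p h.+1 (pred1 k)) @ \oo --> qLIS p k.
  by rewrite (cvg_shiftS (fun h => A p h (pred1 k))).
have H3 : (fun h => A p h.+1 (pred1 k)) @ \oo -->
   (1 == k)%N%:R * 2^-1 + (2^-1 * p) * (\sum_(i < k.+1) qLIS p i * qLIS p (k - i)%N)
    + (2^-1 * (1 - p)) * (2 * qLIS p k * (1 - QLIS p k) + qLIS p k * qLIS p k).
  under eq_fun do rewrite A_rec A_split expr2.
  apply: cvgD; first apply: cvgD.
  - exact: cvg_cst.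
  - apply: cvgM; first exact: cvg_cst.
    apply: (cvg_sum_ord (n := k.+1) (u := fun i h => A p h (pred1 i) * A p h (pred1 (k - i)%N)) (l := fun i => qLIS p i * qLIS p (k - i)%N)) => i.
    by apply: cvgM; apply: Hq.
  - apply: cvgM; first exact: cvg_cst.
    apply: cvgD; last by apply: cvgM; apply: Hq.
    apply: cvgM; [apply: cvgM; [exact: cvg_cst | exact: Hq] | exact: cvgB].
have E := etrans (esym (cvg_lim (@Rhausdorff R) H2)) (cvg_lim (@Rhausdorff R) H3).
rewrite {1}E; have -> : (1 == k)%N = false by apply/negbTE; lia.
by rewrite expr2 /= mul0r add0r.
Qed.

Lemma q_ge0 (R : realType) (p : R) k : 0 <= p <= 1 -> 0 <= qLIS p k.
Proof.
move=> Hp; rewrite qLIS_A; apply: (@le_trans _ _ (A p 0 (pred1 k))); first exact: A_ge0.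
exact: A_le_lim.
Qed.

Lemma Q_ge0 (R : realType) (p : R) k : 0 <= p <= 1 -> 0 <= QLIS p k.
Proof.
move=> Hp; rewrite QLIS_A; apply: (@le_trans _ _ (A p 0 (fun n => (k <= n)%N))); first exact: A_ge0.
exact: A_le_lim.
Qed.

Lemma q0 (R : realType) (p : R) : qLIS p 0 = 0.
Proof.
rewrite qLIS_A; under eq_fun do rewrite A_0.
exact: (cvg_lim (@Rhausdorff R) (cvg_cst 0)).
Qed.

Lemma q1 (R : realType) (p : R) : 0 <= p <= 1 -> 2^-1 <= qLIS p 1.
Proof.
move=> Hp; rewrite qLIS_A; apply: (@le_trans _ _ (A p 0 (pred1 1%N))); last exact: A_le_lim.
by rewrite /A big_seq1 /= /weight /= expr1 !expr0 !mulr1 mul1r.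
Qed.

Lemma sum_fold (R : realType) n (c : bool) (F : nat -> R) :
  \sum_(i < (2 * n + c)%N) F i =
  \sum_(i < n) (F i + F (2 * n + c - 1 - i)%N) + (if c then F n else 0).
Proof.
elim: n F => [|n IH] F.
  by case: c; rewrite /= ?big_ord1 !big_ord0 ?add0r ?addr0.
have -> : (2 * n.+1 + c = (2 * n + c).+2)%N by lia.
rewrite big_ord_recl big_ord_recr /= (IH (fun i => F (bump 0 i))) big_ord_recl /=.
have -> : ((2 * n + c).+2 - 1 - 0 = (2 * n + c).+1)%N by lia.
rewrite /bump /= !add1n.
rewrite [X in _ = _ + X + _](eq_bigr (fun i : 'I_n => F i.+1 + F (2 * n + c - 1 - i).+1)); last first.
  by move=> i _; congr (_ + F _); have := ltn_ord i; lia.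
ring.
Qed.

Lemma sym_split (R : realType) (f : nat -> R) k : f 0%N = 0 -> (1 <= k)%N ->
  \sum_(i < k.+1) f i * f (k - i)%N =
  2 * \sum_(1 <= i < ((k - 1)./2).+1) f i * f (k - i)%N
  + (if ~~ odd k then f k./2 ^+ 2 else 0).
Proof.
move=> f0 Hk; set m := ((k - 1)./2).
have Hk1 : (k.+1 = 2 * m.+1 + ~~ odd k)%N by rewrite /m; lia.
rewrite Hk1 (sum_fold _ _ (fun i => f i * f (k - i)%N)).
congr (_ + _).
  rewrite big_add1 /= big_mkord big_ord_recl /= subn0 f0 mul0r add0r mulr_sumr.
  have -> : (2 * m.+1 + ~~ odd k - 1 - 0 = k)%N by rewrite /m; lia.
  rewrite subnn f0 mulr0 add0r.
  apply: eq_bigr => i _; rewrite /bump /= add1n.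
  have Hi : (i < (k - 1)./2)%N := ltn_ord i.
  have -> : (2 * m.+1 + ~~ odd k - 1 - i.+1 = k - i.+1)%N by rewrite /m; move: Hi Hk; clear; lia.
  have -> : (k - (k - i.+1) = i.+1)%N by move: Hi Hk; clear; lia.
  ring.
case Ho: (odd k) => //=.
have -> : (k./2 = m.+1)%N by rewrite /m; lia.
have -> : (k - m.+1 = m.+1)%N by rewrite /m; lia.
by rewrite expr2.
Qed.

Lemma q_rec2 (R : realType) (p : R) k : 0 < p -> p <= 1 -> (2 <= k)%N ->
  qLIS p k * (1 + (1 - p) / p * QLIS p k) =
  \sum_(1 <= i < ((k - 1)./2).+1) qLIS p i * qLIS p (k - i)%N
  + (1 - p) / (2 * p) * qLIS p k ^+ 2
  + (if ~~ odd k then 2^-1 * qLIS p k./2 ^+ 2 else 0).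
Proof.
move=> Hp0 Hp1 Hk.
have Hp : 0 <= p <= 1 by rewrite Hp1 ltW.
have E := q_rec Hp Hk.
rewrite (sym_split (f := qLIS p)) ?q0 // in E; last by lia.
set S := \sum_(1 <= i < _) _ in E *.
have Hpn : p != 0 by rewrite gt_eqF.
case: (~~ odd k) E => /= E.
  set a := qLIS p k./2 in E *; set q := qLIS p k in E *; set Q := QLIS p k in E *.
  apply/eqP; rewrite -subr_eq0; apply/eqP.
  transitivity ((q - (2^-1 * p * (2 * S + a ^+ 2) + 2^-1 * (1 - p) * (2 * q * (1 - Q) + q ^+ 2))) / p).
    by field.
  by rewrite {1}E subrr mul0r.
set q := qLIS p k in E *; set Q := QLIS p k in E *.
apply/eqP; rewrite -subr_eq0; apply/eqP.
transitivity ((q - (2^-1 * p * (2 * S + 0) + 2^-1 * (1 - p) * (2 * q * (1 - Q) + q ^+ 2))) / p).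
  by field.
by rewrite {1}E subrr mul0r.
Qed.

Lemma term_le_sum (R : realType) (F : nat -> R) a b k : (a <= k < b)%N ->
  (forall j, (a <= j < b)%N -> 0 <= F j) -> F k <= \sum_(a <= j < b) F j.
Proof.
move=> Hk HF; rewrite (bigD1_seq k) /= ?mem_index_iota ?iota_uniq //.
rewrite lerDl big_seq_cond; apply: sumr_ge0 => j /andP[Hj _].
by apply: HF; rewrite -mem_index_iota.
Qed.

Lemma sum_nat_ge0 (R : realType) (F : nat -> R) a b :
  (forall j, (a <= j < b)%N -> 0 <= F j) -> 0 <= \sum_(a <= j < b) F j.
Proof.
move=> HF; rewrite big_seq_cond; apply: sumr_ge0 => j /andP[Hj _].
by apply: HF; rewrite -mem_index_iota.
Qed.

Lemma D_gt0 (R : realType) (p : R) k : 0 < p -> p <= 1 -> 0 < 1 + (1 - p) / p * QLIS p k.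
Proof.
move=> Hp0 Hp1; have Hp : 0 <= p <= 1 by rewrite Hp1 ltW.
apply: (@lt_le_trans _ _ 1) => //; rewrite lerDl; apply: mulr_ge0; last exact: Q_ge0.
by apply: divr_ge0; [rewrite subr_ge0 | apply: ltW].
Qed.

Lemma q_pos (R : realType) (p : R) k : 0 < p -> p <= 1 -> (1 <= k)%N -> 0 < qLIS p k.
Proof.
move=> Hp0 Hp1; have Hp : 0 <= p <= 1 by rewrite Hp1 ltW.
elim/ltn_ind: k => k IH Hk.
case: (ltnP k 2) => Hk2.
  have -> : k = 1%N by lia.
  by apply: (@lt_le_trans _ _ 2^-1); [rewrite invr_gt0 | apply: q1].
have E := q_rec2 Hp0 Hp1 Hk2.
have HD := D_gt0 k Hp0 Hp1.
rewrite -(pmulr_lgt0 _ HD) E.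
have HS : forall a, 0 <= \sum_(a <= i < ((k - 1)./2).+1) qLIS p i * qLIS p (k - i)%N.
  by move=> a; apply: sum_nat_ge0 => j _; apply: mulr_ge0; apply: q_ge0.
have HX : 0 <= (1 - p) / (2 * p) * qLIS p k ^+ 2.
  apply: mulr_ge0; last exact: sqr_ge0.
  by apply: divr_ge0; [rewrite subr_ge0 | apply: mulr_ge0 => //; apply: ltW].
case Ho: (odd k) => /=.
  rewrite addr0 big_ltn; last by lia.
  apply: (@lt_le_trans _ _ (qLIS p 1 * qLIS p (k - 1)%N)).
    by apply: mulr_gt0; apply: IH; lia.
  by rewrite -addrA lerDl; apply: addr_ge0.
apply: (@lt_le_trans _ _ (2^-1 * qLIS p k./2 ^+ 2)).
  apply: mulr_gt0; first by rewrite invr_gt0.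
  by apply: exprn_gt0; apply: IH; lia.
by rewrite lerDr; apply: addr_ge0.
Qed.


Local Close Scope classical_set_scope.
Unset Implicit Arguments. Set Strict Implicit.

Theorem lemma8p2 (R : realType) (p : R) (hp0 : 0 < p) (hp1 : p < 1)
    (qhat : nat -> R) (hqhat : forall k : nat, (1 <= k)%N -> 0 < qhat k) :
  ((exists K : nat, forall k : nat, (K <= k)%N ->
      qhat k >= (1 + (1 - p) / p * QLIS p k)^-1 *
        (\sum_(1 <= i < ((k - 1)./2).+1) qLIS p i * qhat (k - i)%N
         + (1 - p) / (2 * p) * qLIS p k ^+ 2
         + (if ~~ odd k then 2^-1 * qLIS p k./2 ^+ 2 else 0)))
   -> exists2 C : R, 0 < C & forall k : nat, (1 <= k)%N -> qLIS p k <= C * qhat k)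
  /\
  ((exists K : nat, forall k : nat, (K <= k)%N ->
      qhat k <= (1 + (1 - p) / p * QLIS p k)^-1 *
        \sum_(1 <= i < ((k - 1)./2).+1) qLIS p i * qhat (k - i)%N)
   -> exists2 c : R, 0 < c & forall k : nat, (1 <= k)%N -> c * qhat k <= qLIS p k).
Proof.
have Hp1 : p <= 1 by apply: ltW.
have Hp : 0 <= p <= 1 by rewrite Hp1 ltW.
have HX : forall k, 0 <= (1 - p) / (2 * p) * qLIS p k ^+ 2.
  move=> k; apply: mulr_ge0; last exact: sqr_ge0.
  by apply: divr_ge0; [rewrite subr_ge0 | apply: mulr_ge0 => //; apply: ltW].
have HY : forall k, 0 <= (if ~~ odd k then 2^-1 * qLIS p k./2 ^+ 2 else 0).
  move=> k; case: (~~ odd k) => //; apply: mulr_ge0; last exact: sqr_ge0.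
  by rewrite invr_ge0.
split.
- move=> [K HK]; set K' := maxn K 2.
  set M := \sum_(1 <= j < K') qLIS p j / qhat j.
  have HM : 0 <= M.
    apply: sum_nat_ge0 => j /andP[Hj _]; apply: divr_ge0; first exact: q_ge0.
    exact: ltW (hqhat _ Hj).
  have HC1 : 1 <= 1 + M by rewrite lerDl.
  exists (1 + M); first exact: lt_le_trans HC1.
  suff main : forall n k, (k <= n)%N -> (1 <= k)%N -> qLIS p k <= (1 + M) * qhat k.
    by move=> k Hk; apply: (main k).
  elim=> [|n IH] k Hkn Hk1; first by exfalso; lia.
  have Hqh := hqhat k Hk1.
  case: (ltnP k K') => HkK.
    rewrite -ler_pdivrMr //; apply: le_trans (ler_wpDl ler01 (lexx M)).
    apply: (term_le_sum (F := fun j => qLIS p j / qhat j)); first by lia.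
    move=> j /andP[Hj _]; apply: divr_ge0; first exact: q_ge0.
    exact: ltW (hqhat _ Hj).
  have Hk2 : (2 <= k)%N by lia.
  have H := HK k ltac:(lia).
  have E := q_rec2 hp0 Hp1 Hk2.
  have HD := D_gt0 k hp0 Hp1.
  set D := 1 + (1 - p) / p * QLIS p k in H E HD.
  set Sh := \sum_(1 <= i < _) qLIS p i * qhat (k - i)%N in H.
  set S := \sum_(1 <= i < _) qLIS p i * qLIS p (k - i)%N in E.
  set X := (1 - p) / (2 * p) * qLIS p k ^+ 2 in H E.
  set Y := (if ~~ odd k then _ else _) in H E.
  have HXk := HX k; have HYk := HY k.
  have H1 : S <= (1 + M) * Sh.
    rewrite /S /Sh mulr_sumr; apply: ler_sum_nat => i Hi.
    rewrite mulrCA; apply: ler_wpM2l; first exact: q_ge0.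
    have A1 : (k - i <= n)%N by move: Hi Hkn Hk2; clear; lia.
    have A2 : (0 < k - i)%N by move: Hi Hkn Hk2; clear; lia.
    exact: IH A1 A2.
  have H2 : qLIS p k * D <= (1 + M) * (D * qhat k).
    rewrite E; apply: (@le_trans _ _ ((1 + M) * (Sh + X + Y))).
      rewrite (_ : (1 + M) * (Sh + X + Y) = (1 + M) * Sh + (1 + M) * (X + Y)); last by ring.
      rewrite -addrA; apply: lerD => //; apply: ler_peMl => //; exact: addr_ge0.
    apply: ler_wpM2l; first exact: le_trans HC1.
    by rewrite -ler_pdivrMl // mulrC.
  by rewrite -(ler_pM2r HD) -mulrA (mulrC (qhat k)).
- move=> [K HK]; set K' := maxn K 2.
  set M := \sum_(1 <= j < K') qhat j / qLIS p j.
  have HM : 0 <= M.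
    apply: sum_nat_ge0 => j /andP[Hj _]; apply: divr_ge0; first exact: ltW (hqhat _ Hj).
    exact: q_ge0.
  have HM1 : 0 < 1 + M by apply: lt_le_trans (ler_wpDr HM (lexx 1)).
  exists (1 + M)^-1; first by rewrite invr_gt0.
  suff main : forall n k, (k <= n)%N -> (1 <= k)%N -> (1 + M)^-1 * qhat k <= qLIS p k.
    by move=> k Hk; apply: (main k).
  elim=> [|n IH] k Hkn Hk1; first by exfalso; lia.
  have Hqh := hqhat k Hk1.
  have Hqk := q_pos hp0 Hp1 Hk1.
  case: (ltnP k K') => HkK.
    rewrite ler_pdivrMl // -ler_pdivrMr //; apply: le_trans (ler_wpDl ler01 (lexx M)).
    apply: (term_le_sum (F := fun j => qhat j / qLIS p j)); first by lia.
    move=> j /andP[Hj _]; apply: divr_ge0; first exact: ltW (hqhat _ Hj).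
    exact: q_ge0.
  have Hk2 : (2 <= k)%N by lia.
  have H := HK k ltac:(lia).
  have E := q_rec2 hp0 Hp1 Hk2.
  have HD := D_gt0 k hp0 Hp1.
  set D := 1 + (1 - p) / p * QLIS p k in H E HD.
  set Sh := \sum_(1 <= i < _) qLIS p i * qhat (k - i)%N in H.
  set S := \sum_(1 <= i < _) qLIS p i * qLIS p (k - i)%N in E.
  set X := (1 - p) / (2 * p) * qLIS p k ^+ 2 in E.
  set Y := (if ~~ odd k then _ else _) in E.
  have HXk := HX k; have HYk := HY k.
  have H1 : (1 + M)^-1 * Sh <= S.
    rewrite /S /Sh mulr_sumr; apply: ler_sum_nat => i Hi.
    rewrite mulrCA; apply: ler_wpM2l; first exact: q_ge0.
    have A1 : (k - i <= n)%N by move: Hi Hkn Hk2; clear; lia.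
    have A2 : (0 < k - i)%N by move: Hi Hkn Hk2; clear; lia.
    exact: IH A1 A2.
  rewrite -(ler_pM2r HD) E; apply: (@le_trans _ _ S); last first.
    by rewrite -addrA lerDl; apply: addr_ge0.
  apply: le_trans H1; rewrite -mulrA; apply: ler_wpM2l; first by rewrite invr_ge0 ltW.
  by rewrite -ler_pdivlMr // mulrC.
Qed.
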